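(* Let $n\ge3$ and let $L^B$ be a blow-up of $L\cong\mathbf{2}^n$ with atoms $q_1,\dots,q_n$. Then $G(L^B)^{**}$ is the disjoint union $$G(L^B)^{**}=H+K_{|[q_1]|}+K_{|[q_2]|}+\cdots+K_{|[q_n]|},$$ where, for each $i$, $K_{|[q_i]|}$ is the complete graph on the vertex set $[q_i]$, and $H$ is the subgraph induced on $V(G(L^B))\setminus\bigcup_{i}[q_i]$, which is connected.
   Context: Blow-up: for $L\cong\mathbf{2}^n$ with atoms $q_1,\dots,q_n$, replace each $a\in L\setminus\{0,1\}$ by a finite chain $C_a$: $a=a^1\lessdot\cdots\lessdot a^{k_a}$ ($k_a\ge1$), keep $0,1$; elements of one chain are ordered along it, and for $u\in C_a,v\in C_b$ with $a\ne b$ ($C_0=\{0\},C_1=\{1\}$), $u\le v$ iff $a<b$ in $L$. $G(L^B)$ is the zero-divisor graph of $L^B$ (vertices: nonzero elements with a nonzero element meeting them in $0$; adjacency: meet $=0$). For $x\in L^B$, $x^\perp=\{z:x\wedge z=0\}$, $[x]=\{y: y^\perp=x^\perp\}$ (so $[q_i]$ is the chain $C_{q_i}$), and classes are ordered by $[a]\le[b]$ iff $b^\perp\subseteq a^\perp$, with $[a]\wedge[b]=[a\wedge b]$. The graph $G(L^B)^{**}$ has vertex set $V(G(L^B))$, distinct $x,y$ adjacent iff either $[x]=[y]$, or $[x]\wedge[y]\ne[0]$ and $[x],[y]$ are incomparable. ''$+$'' denotes disjoint union of graphs. *)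

(* Defs.v *)
From mathcomp Require Import all_boot.
From Stdlib Require Import Relations.
Set Implicit Arguments. Unset Strict Implicit. Unset Printing Implicit Defensive.

(* Base lattice L = 2^n, elements = subsets of 'I_n; 0 = set0, 1 = setT,
   atoms q_i = [set i].  Blow-up data: k a = length k_a of the chain C_a
   replacing a (only meaningful for a <> 0,1; for 0,1 the chain has length 1). *)
Section Blowup.
Variables (n : nat) (k : {set 'I_n} -> nat).

Definition klen (a : {set 'I_n}) : nat :=
  if (a == set0) || (a == setT) then 1 else k a.

(* Element (a, j) is the (j+1)-th element a^(j+1) of the chain C_a. *)
Definition blowup := {x : {set 'I_n} * nat | x.2 < klen x.1}.

Definition bzero : {set 'I_n} * nat := (set0, 0).

Definition ble (u v : blowup) : Prop :=
  ((val u).1 = (val v).1 /\ (val u).2 <= (val v).2) \/ ((val u).1 \proper (val v).1).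

Definition bmeet (u v : blowup) : {set 'I_n} * nat :=
  let a := (val u).1 in let b := (val v).1 in
  if a == b then (a, minn (val u).2 (val v).2)
  else if a \proper b then val u
  else if b \proper a then val v
  else (a :&: b, (klen (a :&: b)).-1).

Definition perp (x z : blowup) : Prop := bmeet x z = bzero.

Definition sameclass (x y : blowup) : Prop := forall z, perp x z <-> perp y z.

Definition cle (x y : blowup) : Prop := forall z, perp y z -> perp x z.

(* [x] /\ [y] = [x /\ y] <> [0] *)
Definition cmeet_nonzero (x y : blowup) : Prop :=
  exists m : blowup, val m = bmeet x y /\
    exists o : blowup, val o = bzero /\ ~ sameclass m o.

Definition isV (x : blowup) : Prop :=
  val x <> bzero /\ exists z : blowup, val z <> bzero /\ perp x z.

Definition adj2 (x y : blowup) : Prop :=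
  isV x /\ isV y /\ x <> y /\
  (sameclass x y \/ (cmeet_nonzero x y /\ ~ cle x y /\ ~ cle y x)).

Definition inQ (i : 'I_n) (y : blowup) : Prop :=
  exists u : blowup, val u = ([set i], 0) /\ sameclass y u.

Definition inH (x : blowup) : Prop := isV x /\ forall i, ~ inQ i x.

Definition adjH (x y : blowup) : Prop := inH x /\ inH y /\ adj2 x y.

End Blowup.

(* Main.v *)
Require Import Defs.
From mathcomp Require Import all_boot.
From Stdlib Require Import Relations Setoid.

Lemma klen_pos n (k : {set 'I_n} -> nat)
  (hk : forall a : {set 'I_n}, a != set0 -> a != setT -> 0 < k a) s : 0 < klen k s.
Proof. rewrite /klen; case: ifP => // /norP [h1 h2]; exact: hk. Qed.
Arguments klen_pos {n k}.

Lemma snd0 n (k : {set 'I_n} -> nat) (u : blowup k) : (val u).1 = set0 -> (val u).2 = 0.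
Proof.
case: u => [[a j]] /= H e; subst a; move: H; rewrite /klen eqxx /=; by case: j.
Qed.
Arguments snd0 {n k}.

Lemma setI0P n (A B : {set 'I_n}) : A :&: B = set0 <-> (forall x, x \in A -> x \in B -> False).
Proof.
split.
- move=> H x xA xB; have : x \in A :&: B by rewrite inE xA xB.
  by rewrite H inE.
- move=> H; apply/setP => x; rewrite !inE; apply/negbTE/negP => /andP [xA xB].
  exact: (H x xA xB).
Qed.

Lemma perpE {n} {k : {set 'I_n} -> nat} (x z : blowup k) :
  perp x z <-> (val x).1 :&: (val z).1 = set0.
Proof.
have hx := snd0 x; have hz := snd0 z.
rewrite /perp /bmeet /bzero.
case: eqP => [eab|nab].
  rewrite -eab setIid; split; first by case.
  by move=> e; rewrite hx // hz -?eab // e.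
case: ifP => [pab|_].
  have -> : (val x).1 :&: (val z).1 = (val x).1 by apply/setIidPl; exact: proper_sub.
  split; first by move=> ->. by move=> e; rewrite -(hx e) -e; case: (val x).
case: ifP => [pba|_].
  have -> : (val x).1 :&: (val z).1 = (val z).1 by apply/setIidPr; exact: proper_sub.
  split; first by move=> ->. by move=> e; rewrite -(hz e) -e; case: (val z).
split; first by case.
by move=> ->; rewrite /klen eqxx.
Qed.

Definition mk n (k : {set 'I_n} -> nat)
  (hk : forall a : {set 'I_n}, a != set0 -> a != setT -> 0 < k a) (s : {set 'I_n}) : blowup k :=
  exist _ (s, 0) (klen_pos hk s).
Arguments mk {n k}.

Lemma exists_notin {n} {a : {set 'I_n}} : a != setT -> exists j, j \notin a.
Proof.
move=> H; case: (pickP (fun j => j \notin a)) => [j Hj|Hn]; first by exists j.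
by move: H; rewrite eqEsubset subsetT /= => /subsetPn [x _]; rewrite Hn.
Qed.

Lemma sameclassE {n} {k : {set 'I_n} -> nat}
  (hk : forall a : {set 'I_n}, a != set0 -> a != setT -> 0 < k a) (x y : blowup k) :
  sameclass x y <-> (val x).1 = (val y).1.
Proof.
split; last by move=> e z; rewrite !perpE e.
move=> H; apply/setP => i.
have := H (mk hk [set i]); rewrite !perpE /= !setI0P => [[h1 h2]].
apply/idP/idP => hi.
- apply/negPn/negP => hn; apply: (h2 _ i hi); last by rewrite inE.
  by move=> j hj; rewrite inE => /eqP e; subst; rewrite hj in hn.
- apply/negPn/negP => hn; apply: (h1 _ i hi); last by rewrite inE.
  by move=> j hj; rewrite inE => /eqP e; subst; rewrite hj in hn.
Qed.

Lemma cleE {n} {k : {set 'I_n} -> nat}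
  (hk : forall a : {set 'I_n}, a != set0 -> a != setT -> 0 < k a) (x y : blowup k) :
  cle x y <-> (val x).1 \subset (val y).1.
Proof.
split.
- move=> H; apply/subsetP => i hi; apply/negPn/negP => hn.
  have := H (mk hk [set i]); rewrite !perpE /= !setI0P => h.
  apply: (h _ i hi); last by rewrite inE.
  by move=> j hj; rewrite inE => /eqP e; subst; rewrite hj in hn.
- move=> /subsetP s z; rewrite !perpE !setI0P => h j hj hz; exact: (h j (s j hj) hz).
Qed.

Lemma isVE {n} {k : {set 'I_n} -> nat}
  (hk : forall a : {set 'I_n}, a != set0 -> a != setT -> 0 < k a) (x : blowup k) :
  isV x <-> (val x).1 != set0 /\ (val x).1 != setT.
Proof.
split.
- case=> hx [z [hz /perpE hp]]; split.
  + apply/eqP => e; apply: hx; rewrite /bzero -e -(snd0 x e); by case: (val x).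
  + apply/eqP => e; rewrite e setTI in hp; apply: hz.
    rewrite /bzero -hp -(snd0 z hp); by case: (val z).
- case=> h1 h2; split.
  + by move=> e; rewrite e eqxx in h1.
  + case: (exists_notin h2) => j hj; exists (mk hk [set j]); split.
    * by case => /setP /(_ j); rewrite !inE eqxx.
    * apply/perpE; apply/setI0P => l /= hl; rewrite inE => /eqP e; subst.
      by rewrite hl in hj.
Qed.

Lemma inQE {n} {k : {set 'I_n} -> nat}
  (hk : forall a : {set 'I_n}, a != set0 -> a != setT -> 0 < k a) i (y : blowup k) :
  inQ i y <-> (val y).1 = [set i].
Proof.
split.
- by case=> u [hu /(sameclassE hk)]; rewrite hu.
- move=> h; exists (mk hk [set i]); split => //; apply/(sameclassE hk); by rewrite h.
Qed.

Lemma bmeet_valid {n} {k : {set 'I_n} -> nat}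
  (hk : forall a : {set 'I_n}, a != set0 -> a != setT -> 0 < k a) (x y : blowup k) :
  (bmeet x y).2 < klen k (bmeet x y).1.
Proof.
rewrite /bmeet; case: eqP => [e|_] /=.
  exact: leq_ltn_trans (geq_minl _ _) (valP x).
case: ifP => _; first exact: (valP x).
case: ifP => _; first exact: (valP y).
by rewrite /= prednK // klen_pos.
Qed.

Lemma adjI {n} {k : {set 'I_n} -> nat}
  (hk : forall a : {set 'I_n}, a != set0 -> a != setT -> 0 < k a) (x y : blowup k) :
  isV x -> isV y -> (val x).1 :&: (val y).1 != set0 ->
  ~~ ((val x).1 \subset (val y).1) -> ~~ ((val y).1 \subset (val x).1) -> adj2 x y.
Proof.
move=> hx hy hI s1 s2; split => //; split => //; split.
  by move=> e; subst; rewrite subxx in s1.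
right; split; last by split; move/(cleE hk); apply/negP.
exists (exist _ (bmeet x y) (bmeet_valid hk x y)); split => //.
exists (mk hk set0); split => //.
move/(sameclassE hk) => /= e.
have hp : perp x y.
  rewrite /perp /bzero -e; move: (bmeet_valid hk x y); rewrite e /klen eqxx /=.
  by move: e; case: (bmeet x y) => a [|j] /= ->.
by move/perpE: hp => hp; rewrite hp eqxx in hI.
Qed.

Lemma node_inH {n} {k : {set 'I_n} -> nat}
  (hk : forall a : {set 'I_n}, a != set0 -> a != setT -> 0 < k a) (hn : 3 <= n) {i j : 'I_n} :
  i != j -> inH (mk hk [set i; j]).
Proof.
move=> hij; split.
- apply/(isVE hk) => /=; split.
  + by apply/set0Pn; exists i; rewrite !inE eqxx.
  + apply/negP => /eqP e; have := cards2 i j; rewrite e cardsT card_ord hij => e2.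
    by rewrite e2 in hn.
- move=> l /(inQE hk) /= /setP e.
  have h1 : i \in [set l] by rewrite -e !inE eqxx.
  have h2 : j \in [set l] by rewrite -e !inE eqxx orbT.
  move: h1 h2; rewrite !inE => /eqP e1 /eqP e2.
  by rewrite e1 e2 eqxx in hij.
Qed.

Lemma adj_node {n} {k : {set 'I_n} -> nat}
  (hk : forall a : {set 'I_n}, a != set0 -> a != setT -> 0 < k a) (hn : 3 <= n)
  (x : blowup k) (i j : 'I_n) :
  inH x -> i \in (val x).1 -> j \notin (val x).1 ->
  adjH x (mk hk [set i; j]) /\ adjH (mk hk [set i; j]) x.
Proof.
move=> hx hi hj.
have hij : i != j by apply/eqP => e; subst; rewrite hi in hj.
have hN := node_inH hk hn hij.
have [hxV hxQ] := hx.
have hI : (val x).1 :&: (val (mk hk [set i; j])).1 != set0.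
  by apply/set0Pn; exists i; rewrite /= !inE eqxx hi.
have s1 : ~~ ((val x).1 \subset (val (mk hk [set i; j])).1).
  apply/negP => /subsetP s; apply: (hxQ i); apply/(inQE hk); apply/setP => l.
  rewrite inE; apply/idP/eqP => [hl|->//].
  move: (s l hl); rewrite /= !inE => /orP [/eqP //|/eqP e]; subst.
  by rewrite hl in hj.
have s2 : ~~ ((val (mk hk [set i; j])).1 \subset (val x).1).
  by apply/negP => /subsetP s; move: (s j); rewrite /= !inE eqxx orbT => /(_ isT) h; rewrite h in hj.
split; split => //; split => //; apply: (adjI hk) => //; first by case: hN.
- by case: hN.
- by rewrite setIC.
Qed.

Lemma L2 {n} {k : {set 'I_n} -> nat}
  (hk : forall a : {set 'I_n}, a != set0 -> a != setT -> 0 < k a) (hn : 3 <= n) {i j l : 'I_n} :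
  i != j -> i != l -> clos_refl_trans _ (@adjH n k) (mk hk [set i; j]) (mk hk [set i; l]).
Proof.
move=> hij hil.
case: (eqVneq j l) => [<-|hjl]; first exact: rt_refl.
apply: rt_step.
have hNj := node_inH hk hn hij; have hNl := node_inH hk hn hil.
split => //; split => //; apply: (adjI hk); first by case: hNj.
- by case: hNl.
- by apply/set0Pn; exists i; rewrite /= !inE eqxx.
- apply/negP => /subsetP s; move: (s j); rewrite /= !inE eqxx orbT => /(_ isT).
  by rewrite (negbTE hjl) eq_sym (negbTE hij).
- apply/negP => /subsetP s; move: (s l); rewrite /= !inE eqxx orbT => /(_ isT).
  by rewrite eq_sym (negbTE hil) eq_sym (negbTE hjl).
Qed.

Lemma L3 {n} {k : {set 'I_n} -> nat}
  (hk : forall a : {set 'I_n}, a != set0 -> a != setT -> 0 < k a) (hn : 3 <= n) (i j i' j' : 'I_n) :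
  i != j -> i' != j' ->
  clos_refl_trans _ (@adjH n k) (mk hk [set i; j]) (mk hk [set i'; j']).
Proof.
move=> hij hij'.
case: (eqVneq i i') => [e|hii].
  by subst; have := L2 hk hn hij hij'.
apply: rt_trans; first exact (L2 hk hn hij hii).
have -> : [set i; i'] = [set i'; i] by rewrite setUC.
have hi : i' != i by rewrite eq_sym.
exact (L2 hk hn hi hij').
Qed.

Lemma cmeetE {n} {k : {set 'I_n} -> nat}
  (hk : forall a : {set 'I_n}, a != set0 -> a != setT -> 0 < k a) (x y : blowup k) :
  cmeet_nonzero x y -> (val x).1 :&: (val y).1 != set0.
Proof.
case=> m [hm [o [ho hs]]]; apply/negP => /eqP h.
have hp : perp x y by apply/perpE.
have e : m = o by apply: val_inj; rewrite hm ho.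
by subst; apply: hs.
Qed.

Theorem mainTheorem7 (n : nat) (k : {set 'I_n} -> nat)
  (hn : 3 <= n)
  (hk : forall a : {set 'I_n}, a != set0 -> a != setT -> 0 < k a) :
  (* each [q_i] is a set of vertices of G(L^B)^**, and the [q_i] are pairwise disjoint *)
  (forall i (y : blowup k), inQ i y -> isV y) /\
  (forall i j (y : blowup k), inQ i y -> inQ j y -> i = j) /\
  (* each [q_i] induces a complete graph K_{|[q_i]|} *)
  (forall i (x y : blowup k), inQ i x -> inQ i y -> x <> y -> adj2 x y) /\
  (* no edges between distinct components among H, [q_1], ..., [q_n] *)
  (forall x y : blowup k, adj2 x y -> forall i, inQ i x <-> inQ i y) /\
  (* H, induced on V \ U_i [q_i], is connected *)
  (forall x y : blowup k, inH x -> inH y -> clos_refl_trans _ (@adjH n k) x y).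
Proof.
have hQV : forall i (y : blowup k), inQ i y -> isV y.
  move=> i y /(inQE hk) e; apply/(isVE hk); rewrite e; split.
  - by apply/set0Pn; exists i; rewrite inE.
  - apply/negP => /eqP e2; have := cards1 i; rewrite e2 cardsT card_ord => e3.
    by rewrite e3 in hn.
split => //; split.
  move=> i j y /(inQE hk) e1 /(inQE hk); rewrite e1 => /setP /(_ i).
  by rewrite !inE eqxx => /esym /eqP.
split.
  move=> i x y hx hy nxy; split; first exact: hQV hx.
  split; first exact: hQV hy.
  split => //; left; apply/(sameclassE hk).
  by move/(inQE hk): hx => ->; move/(inQE hk): hy => ->.
split.
  move=> x y [_ [_ [_ [/(sameclassE hk) e| [cm [c1 c2]]]]]] i.
    by rewrite !(inQE hk) e.
  have hI := cmeetE hk x y cm.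
  have key : forall (u v : blowup k), (val u).1 = [set i] ->
      (val u).1 :&: (val v).1 != set0 -> ~ cle u v -> False.
    move=> u v hu hI' n1; apply: n1; apply/(cleE hk); rewrite hu sub1set.
    case/set0Pn: hI' => l; rewrite hu !inE => /andP [/eqP <-] //.
  rewrite !(inQE hk); split => h; exfalso.
  - exact (key x y h hI c1).
  - by apply: (key y x h _ c2); rewrite setIC.
move=> x y hx hy.
have [[hx1 hx2] _] : ((val x).1 != set0 /\ (val x).1 != setT) /\ True.
  by split => //; apply/(isVE hk); case: hx.
have [[hy1 hy2] _] : ((val y).1 != set0 /\ (val y).1 != setT) /\ True.
  by split => //; apply/(isVE hk); case: hy.
case/set0Pn: hx1 => i hi; case: (exists_notin hx2) => j hj.
case/set0Pn: hy1 => i' hi'; case: (exists_notin hy2) => j' hj'.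
have hij : i != j by apply/eqP => e; subst; rewrite hi in hj.
have hij' : i' != j' by apply/eqP => e; subst; rewrite hi' in hj'.
apply: rt_trans; first exact (rt_step _ _ _ _ (proj1 (adj_node hk hn x i j hx hi hj))).
apply: rt_trans; first exact (L3 hk hn i j i' j' hij hij').
exact (rt_step _ _ _ _ (proj2 (adj_node hk hn y i' j' hy hi' hj'))).
Qed.
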